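(* Let $A$ be a commutative $\mathbb{N}$-graded ring generated as an $A_0$-algebra by homogeneous elements $x_1,\dots,x_n$ of positive degrees $\omega_1,\dots,\omega_n$, and let $w=\mathrm{lcm}(\omega_1,\dots,\omega_n)$. Let $k$ be a positive integer and $I=A_{\ge kw}$. If $I^p=A_{\ge pkw}$ for all integers $p$ with $1\le p\le \frac{n-2}{k}+1$, then $I^p=A_{\ge pkw}$ for all $p\ge 1$. In particular, if $k\ge n-1$, then $I^p=A_{\ge pkw}$ for all $p\ge1$.
   Context: For an $\mathbb{N}$-graded ring $A$ and a positive integer $m$, $A_{\ge m}=\bigoplus_{j\ge m}A_j$. *)

(* Defs.v *)
From HB Require Import structures.
From Stdlib Require List.
From mathcomp Require Import all_boot all_order all_algebra.
Set Implicit Arguments. Unset Strict Implicit. Unset Printing Implicit Defensive.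
Import GRing.Theory.
Local Open Scope ring_scope.

Definition subset_of (A : Type) := A -> Prop.

Definition is_Ngrading (A : comPzRingType) (G : nat -> subset_of A) : Prop :=
  [/\ (forall j, G j 0) /\ (forall j x y, G j x -> G j y -> G j (x - y)),
      (forall i j x y, G i x -> G j y -> G (i + j)%N (x * y)),
      G 0%N 1,
      (forall x : A, exists N (f : nat -> A),
          (forall j, G j (f j)) /\ x = \sum_(j < N) f j)
    & (forall N (f : nat -> A), (forall j, G j (f j)) ->
          \sum_(j < N) f j = 0 -> forall j, (j < N)%N -> f j = 0)].

Definition ge_part (A : comPzRingType) (G : nat -> subset_of A) (m : nat)
  : subset_of A :=
  fun x => exists N (f : nat -> A),
    [/\ (forall j, G j (f j)), (forall j, (j < m)%N -> f j = 0)
      & x = \sum_(j < N) f j].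

Definition ideal_mul (A : comPzRingType) (I J : subset_of A) : subset_of A :=
  fun x => exists s : seq (A * A),
    (forall t, Stdlib.Lists.List.In t s -> I t.1 /\ J t.2) /\
    x = \sum_(t <- s) t.1 * t.2.

Fixpoint ideal_pow (A : comPzRingType) (I : subset_of A) (p : nat) : subset_of A :=
  match p with
  | 0 => fun _ => True
  | p'.+1 => ideal_mul (ideal_pow I p') I
  end.

Definition generated_over_deg0 (A : comPzRingType) (G : nat -> subset_of A)
  (n : nat) (x : 'I_n -> A) : Prop :=
  forall y : A, exists s : seq (A * ('I_n -> nat)),
    (forall t, Stdlib.Lists.List.In t s -> G 0%N t.1) /\
    y = \sum_(t <- s) t.1 * \prod_(i < n) x i ^+ t.2 i.

Definition same_set (A : Type) (I J : subset_of A) : Prop :=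
  forall y, I y <-> J y.

(* Main.v *)
Require Import Defs.
From HB Require Import structures.
From mathcomp Require Import all_boot all_order all_algebra.
From mathcomp Require Import zify ring.
Set Implicit Arguments. Unset Strict Implicit. Unset Printing Implicit Defensive.
Import GRing.Theory.
Local Open Scope ring_scope.

Lemma G0 (A : comPzRingType) (G : nat -> subset_of A) : is_Ngrading G -> forall j, G j 0.
Proof. by case=> [[]]. Qed.

Lemma Gsub (A : comPzRingType) (G : nat -> subset_of A) : is_Ngrading G ->
  forall j x y, G j x -> G j y -> G j (x - y).
Proof. by case=> [[]]. Qed.

Lemma Gadd (A : comPzRingType) (G : nat -> subset_of A) : is_Ngrading G ->
  forall j x y, G j x -> G j y -> G j (x + y).
Proof.
move=> hG j x y hx hy.
have := Gsub hG hx (Gsub hG (G0 hG j) hy).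
by rewrite sub0r opprK.
Qed.

Lemma Gmul (A : comPzRingType) (G : nat -> subset_of A) : is_Ngrading G ->
  forall i j x y, G i x -> G j y -> G (i + j)%N (x * y).
Proof. by case. Qed.

Lemma Gsum (A : comPzRingType) (G : nat -> subset_of A) (T : Type) (r : seq T)
  (P : pred T) (F : T -> A) j : is_Ngrading G ->
  (forall t, P t -> G j (F t)) -> G j (\sum_(t <- r | P t) F t).
Proof.
move=> hG hF; apply: (big_ind (G j)) => //; first exact: G0.
by move=> a b; apply: Gadd.
Qed.

Lemma direct_eq (A : comPzRingType) (G : nat -> subset_of A) : is_Ngrading G ->
  forall N (f g : nat -> A), (forall j, G j (f j)) -> (forall j, G j (g j)) ->
  \sum_(j < N) f j = \sum_(j < N) g j -> forall j, (j < N)%N -> f j = g j.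
Proof.
move=> hG N f g hf hg he j hj; have [_ _ _ _ hd] := hG.
apply/eqP; rewrite -subr_eq0; apply/eqP.
apply: (hd N (fun j => f j - g j)) => //.
  by move=> l; apply: Gsub.
by rewrite sumrB he subrr.
Qed.

Lemma sum_In (A : comPzRingType) (P : A -> Prop) (T : Type) (s : seq T) (F : T -> A) :
  P 0 -> (forall a b, P a -> P b -> P (a + b)) ->
  (forall t, List.In t s -> P (F t)) -> P (\sum_(t <- s) F t).
Proof.
move=> h0 hadd; elim: s => [|t s IH] hF; first by rewrite big_nil.
rewrite big_cons; apply: hadd; first by apply: hF; left.
by apply: IH => u hu; apply: hF; right.
Qed.

Lemma sum_delta (A : comPzRingType) N d (a : A) : (d < N)%N ->
  \sum_(j < N) (if d == nat_of_ord j then a else 0) = a.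
Proof.
move=> hd; rewrite (bigD1 (Ordinal hd)) //= eqxx big1 ?addr0 //.
move=> j hj; case: eqP => // E; move/eqP: hj; case; apply: val_inj; by rewrite /= E.
Qed.

Lemma exchange_deg (A : comPzRingType) (T : Type) (s : seq T) (F : T -> A) (dg : T -> nat) N :
  (forall t, List.In t s -> (dg t < N)%N) ->
  \sum_(t <- s) F t = \sum_(j < N) \sum_(t <- s) (if dg t == nat_of_ord j then F t else 0).
Proof.
elim: s => [|t s IH] hs.
  by rewrite big_nil big1 // => j _; rewrite big_nil.
rewrite big_cons IH; last by move=> u hu; apply: hs; right.
under [RHS]eq_bigr => j _ do rewrite big_cons.
by rewrite big_split /= sum_delta //; apply: hs; left.
Qed.

Lemma bound_In (T : Type) (s : seq T) (dg : T -> nat) :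
  exists N, forall t, List.In t s -> (dg t < N)%N.
Proof.
elim: s => [|t s [N IH]]; first by exists 0%N.
exists (maxn N (dg t).+1) => u [<-|hu]; first by rewrite leq_max leqnn orbT.
by rewrite leq_max IH.
Qed.

Lemma ge_hom (A : comPzRingType) (G : nat -> subset_of A) : is_Ngrading G ->
  forall m d h, (m <= d)%N -> G d h -> ge_part G m h.
Proof.
move=> hG m d h hmd hh.
exists d.+1, (fun j => if d == j then h else 0); split.
- by move=> j; case: eqP => [<-|_] //; apply: G0.
- by move=> j hj; case: eqP => // E; move: hj; rewrite -E ltnNge hmd.
- by rewrite (sum_delta (A:=A) (N:=d.+1) (d:=d)).
Qed.

Lemma ge_0 (A : comPzRingType) (G : nat -> subset_of A) : is_Ngrading G ->
  forall m, ge_part G m 0.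
Proof.
move=> hG m; exists 0%N, (fun _ => 0); split => //; last by rewrite big_ord0.
by move=> j; apply: G0.
Qed.

Lemma ge_add (A : comPzRingType) (G : nat -> subset_of A) : is_Ngrading G ->
  forall m a b, ge_part G m a -> ge_part G m b -> ge_part G m (a + b).
Proof.
move=> hG m a b [N1 [f [hf hf0 ->]]] [N2 [g [hg hg0 ->]]].
exists (N1 + N2)%N, (fun j => (if (j < N1)%N then f j else 0) + (if (j < N2)%N then g j else 0)).
split.
- move=> j; apply: Gadd => //; case: ifP => _ //; exact: G0.
- by move=> j hj; rewrite hf0 // hg0 // !if_same addr0.
- rewrite big_split /=.
  rewrite (@big_ord_widen A 0 +%R N1 (N1 + N2)%N f (leq_addr N2 N1)).
  rewrite (@big_ord_widen A 0 +%R N2 (N1 + N2)%N g (leq_addl N1 N2)).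
  by congr (_ + _); apply: big_mkcond.
Qed.

Lemma ge_sum (A : comPzRingType) (G : nat -> subset_of A) (T : Type) (r : seq T)
  (P : pred T) (F : T -> A) m : is_Ngrading G ->
  (forall t, P t -> ge_part G m (F t)) -> ge_part G m (\sum_(t <- r | P t) F t).
Proof.
move=> hG hF; apply: (big_ind (ge_part G m)) => //; first exact: ge_0.
by move=> a b; apply: ge_add.
Qed.

Lemma ge_all (A : comPzRingType) (G : nat -> subset_of A) : is_Ngrading G ->
  forall a, ge_part G 0 a.
Proof.
move=> hG a; have [_ _ _ hdec _] := hG; have [N [f [hf ->]]] := hdec a.
by exists N, f; split.
Qed.

Lemma ge_mul (A : comPzRingType) (G : nat -> subset_of A) : is_Ngrading G ->
  forall m1 m2 a b, ge_part G m1 a -> ge_part G m2 b -> ge_part G (m1 + m2) (a * b).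
Proof.
move=> hG m1 m2 a b [N1 [f [hf hf0 ->]]] [N2 [g [hg hg0 ->]]].
rewrite mulr_suml; apply: ge_sum => // i _; rewrite mulr_sumr; apply: ge_sum => // j _.
case: (ltnP i m1) => hi; first by rewrite hf0 // mul0r; apply: ge_0.
case: (ltnP j m2) => hj; first by rewrite hg0 // mulr0; apply: ge_0.
apply: (ge_hom hG (d := (i + j)%N)); first exact: leq_add.
exact: Gmul.
Qed.

Lemma ge_mono (A : comPzRingType) (G : nat -> subset_of A) m1 m2 a :
  (m1 <= m2)%N -> ge_part G m2 a -> ge_part G m1 a.
Proof.
move=> hm [N [f [hf hf0 ->]]]; exists N, f; split => // j hj; apply: hf0.
exact: leq_trans hj hm.
Qed.

Lemma ip_0 (A : comPzRingType) (I : subset_of A) p : ideal_pow I p 0.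
Proof. by case: p => //= p; exists [::]; rewrite big_nil. Qed.

Lemma ip_add (A : comPzRingType) (I : subset_of A) p a b :
  ideal_pow I p.+1 a -> ideal_pow I p.+1 b -> ideal_pow I p.+1 (a + b).
Proof.
move=> [s1 [h1 ->]] [s2 [h2 ->]]; exists (s1 ++ s2); split; last by rewrite big_cat.
move=> t ht; case: (List.in_app_or _ _ _ ht) => ?; [exact: h1 | exact: h2].
Qed.

Lemma ip_scale (A : comPzRingType) (I : subset_of A) p a y :
  ideal_pow I p y -> ideal_pow I p (a * y).
Proof.
elim: p a y => [//|p IH] a y [s [hs ->]].
exists (map (fun t => (a * t.1, t.2)) s); split.
  move=> t ht; have [u [<- hu]] := proj1 (List.in_map_iff _ _ _) ht; have [h1 h2] := hs u hu.
  by split => //; apply: IH.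
by rewrite big_map mulr_sumr; apply: eq_bigr => t _ /=; rewrite mulrA.
Qed.

Lemma ip_mul (A : comPzRingType) (I : subset_of A) p y z :
  ideal_pow I p y -> I z -> ideal_pow I p.+1 (y * z).
Proof.
move=> hy hz; exists [:: (y, z)]; split; last by rewrite big_cons big_nil addr0.
by move=> t [<-|[]].
Qed.

Lemma ip_sub_ge (A : comPzRingType) (G : nat -> subset_of A) m : is_Ngrading G ->
  forall p y, ideal_pow (ge_part G m) p y -> ge_part G (p * m) y.
Proof.
move=> hG; elim=> [|p IH] y /=; first by move=> _; apply: ge_all.
move=> [s [hs ->]]; apply: (sum_In (P := ge_part G (p.+1 * m))).
- exact: ge_0.
- by move=> a b; apply: ge_add.
- move=> t ht; have [h1 h2] := hs t ht.
  by rewrite mulSn addnC; apply: ge_mul => //; apply: IH.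
Qed.

Definition degm n (om : 'I_n -> nat) (e : 'I_n -> nat) : nat := (\sum_(i < n) e i * om i)%N.
Definition mono (A : comPzRingType) n (x : 'I_n -> A) (e : 'I_n -> nat) : A :=
  \prod_(i < n) x i ^+ e i.

Lemma mono_hom (A : comPzRingType) (G : nat -> subset_of A) n (x : 'I_n -> A) om e :
  is_Ngrading G -> (forall i, G (om i) (x i)) -> G (degm om e) (mono x e).
Proof.
move=> hG hx; rewrite /degm /mono.
apply: (big_ind2 (fun (d : nat) (y : A) => G d y)).
- by have [_ _ ? _ _] := hG.
- by move=> d1 y1 d2 y2 h1 h2; apply: Gmul.
- move=> i _; elim: (e i) => [|m IH]; first by rewrite mul0n expr0; have [_ _ ? _ _] := hG.
  by rewrite mulSn exprS; apply: Gmul.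
Qed.

Lemma degmD n (om : 'I_n -> nat) e1 e2 :
  degm om (fun i => e1 i + e2 i)%N = (degm om e1 + degm om e2)%N.
Proof. by rewrite /degm -big_split; apply: eq_bigr => i _; rewrite mulnDl. Qed.

Lemma monoD (A : comPzRingType) n (x : 'I_n -> A) e1 e2 :
  mono x (fun i => e1 i + e2 i)%N = mono x e1 * mono x e2.
Proof. by rewrite /mono -big_split; apply: eq_bigr => i _; rewrite exprD. Qed.

Lemma degm_ext n (om : 'I_n -> nat) e1 e2 : (forall i, e1 i = e2 i) -> degm om e1 = degm om e2.
Proof. by move=> h; apply: eq_bigr => i _; rewrite h. Qed.

Lemma mono_ext (A : comPzRingType) n (x : 'I_n -> A) e1 e2 :
  (forall i, e1 i = e2 i) -> mono x e1 = mono x e2.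
Proof. by move=> h; apply: eq_bigr => i _; rewrite h. Qed.

Lemma block (n : nat) (om : 'I_n -> nat) (w : nat) :
  (0 < w)%N -> (forall i, om i %| w)%N ->
  forall j (e : 'I_n -> nat), (j * w + n * (w - 1) < degm om e + w)%N ->
  exists e2 : 'I_n -> nat, (forall i, e2 i <= e i)%N /\ degm om e2 = (j * w)%N.
Proof.
move=> w0 hdv; elim=> [|j IH] e hj.
  by exists (fun _ => 0%N); split => //; rewrite /degm big1.
have hbig : (n * (w - 1) < degm om e)%N.
  by move: hj; rewrite mulSn; lia.
have [i hi] : exists i, (w <= e i * om i)%N.
  apply/existsP; apply: contraLR hbig; rewrite negb_exists => /forallP hall.
  rewrite -leqNgt /degm -[n in (n * _)%N]card_ord -sum_nat_const.
  apply: leq_sum => i _; have := hall i; rewrite -ltnNge; lia.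
pose b := (w %/ om i)%N.
have hb : (b * om i = w)%N by rewrite /b divnK.
have hbe : (b <= e i)%N.
  have om0 : (0 < om i)%N by apply: dvdn_gt0 (hdv i).
  by rewrite -(leq_pmul2r om0) hb.
pose dl := fun l : 'I_n => if l == i then b else 0%N.
have hdl : degm om dl = w.
  rewrite /degm (bigD1 i) //= /dl eqxx big1 ?addn0 // => l /negbTE -> //.
have hdle : forall l, (dl l <= e l)%N by move=> l; rewrite /dl; case: eqP => [->|].
pose e' := fun l => (e l - dl l)%N.
have hee : degm om e = (degm om e' + w)%N.
  by rewrite -hdl -degmD; apply: degm_ext => l; rewrite /e' subnK.
have [e3 [h3 h3d]] : exists e3 : 'I_n -> nat, (forall i, e3 i <= e' i)%N /\ degm om e3 = (j * w)%N.
  by apply: IH; move: hj; rewrite hee mulSn; lia.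
exists (fun l => e3 l + dl l)%N; split.
  by move=> l; have := h3 l; have := hdle l; rewrite /e'; lia.
by rewrite degmD h3d hdl mulSn addnC.
Qed.

Theorem lemma3p5 (A : comPzRingType) (G : nat -> subset_of A)
  (n : nat) (x : 'I_n -> A) (om : 'I_n -> nat) (k : nat) :
  is_Ngrading G ->
  (forall i, (0 < om i)%N) ->
  (forall i, G (om i) (x i)) ->
  generated_over_deg0 G x ->
  (0 < k)%N ->
  let w := \big[lcmn/1%N]_(i < n) om i in
  let I := ge_part G (k * w)%N in
  ((forall p : nat, (1 <= p)%N -> (p.-1 * k + 2 <= n)%N ->
       same_set (ideal_pow I p) (ge_part G (p * k * w)%N)) ->
   forall p : nat, (1 <= p)%N -> same_set (ideal_pow I p) (ge_part G (p * k * w)%N))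
  /\
  ((n.-1 <= k)%N ->
   forall p : nat, (1 <= p)%N -> same_set (ideal_pow I p) (ge_part G (p * k * w)%N)).
Proof.
move=> hG hom hx hgen hk w I.
have w0 : (0 < w)%N.
  by apply: (big_ind (fun m => 0 < m)%N) => // a b ha hb; rewrite lcmn_gt0 ha hb.
have hdv : forall i, (om i %| w)%N.
  by move=> i; apply: (biglcmn_sup i) => //; apply: dvdnn.
have core : (forall p, (1 <= p)%N -> (p.-1 * k + 2 <= n)%N ->
     forall y, ge_part G (p * k * w) y -> ideal_pow I p y) ->
   forall p : nat, (1 <= p)%N -> same_set (ideal_pow I p) (ge_part G (p * k * w)%N).
  move=> Hs.
  have Hmono : forall p, (1 <= p)%N -> forall e, (p * k * w <= degm om e)%N ->
      ideal_pow I p (mono x e).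
    elim=> [//|p IH] _ e he.
    case: p IH he => [|p] IH he.
      rewrite -[mono x e]mul1r; apply: (ip_mul (p := 0%N)) => //.
      by apply: (ge_hom hG (d := degm om e)); [rewrite mul1n in he | apply: mono_hom].
    case: (leqP (p.+1 * k + 2) n) => hsmall.
      apply: Hs => //; apply: (ge_hom hG (d := degm om e)) => //; exact: mono_hom.
    have [e2 [h2le h2d]] : exists e2 : 'I_n -> nat,
        (forall i, e2 i <= e i)%N /\ degm om e2 = (k * w)%N.
      apply: block => //.
      have h1 : ((n - 1) * w <= p.+1 * k * w)%N by apply: leq_mul => //; lia.
      move: he; rewrite !mulSn !mulnDl; nia.
    pose e1 := fun i => (e i - e2 i)%N.
    have hsplit : forall i, e i = (e1 i + e2 i)%N by move=> i; rewrite /e1 subnK.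
    rewrite (mono_ext x hsplit) monoD; apply: ip_mul.
      apply: IH => //; move: he; rewrite (degm_ext om hsplit) degmD h2d.
      by rewrite !mulSn !mulnDl; lia.
    apply: (ge_hom hG (d := degm om e2)); first by rewrite h2d.
    exact: mono_hom.
  have Hhom : forall p, (1 <= p)%N -> forall d h, G d h -> (p * k * w <= d)%N ->
      ideal_pow I p h.
    case=> [//|q] _ d h hh hd.
    have [s [hs hh']] := hgen h.
    pose F := fun t : A * ('I_n -> nat) => t.1 * mono x t.2.
    pose dg := fun t : A * ('I_n -> nat) => degm om t.2.
    have [N0 hN0] := bound_In s dg.
    pose N := maxn N0 d.+1.
    have hdN : (d < N)%N by rewrite leq_max leqnn orbT.
    have hN : forall t, List.In t s -> (dg t < N)%N.
      by move=> t ht; rewrite leq_max hN0.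
    pose c := fun j : nat => \sum_(t <- s) (if dg t == j then F t else 0).
    have e1 : h = \sum_(j < N) c j by rewrite hh'; exact: exchange_deg.
    have e2 : h = \sum_(j < N) (if d == j then h else 0) by rewrite sum_delta.
    have hc : c d = h.
      have := (@direct_eq A G hG N c (fun j => if d == j then h else 0)).
      move=> /(_ _ _ _ d hdN) /= -> //; first by rewrite eqxx.
      - move=> j; apply: (sum_In (P := G j)); first exact: G0.
          by move=> a b; apply: Gadd.
        move=> t ht; case: eqP => [<-|_]; last exact: G0.
        rewrite -[dg t]add0n; apply: Gmul => //; first exact: hs.
        exact: mono_hom.
      - by move=> j; case: eqP => [<-|_] //; apply: G0.
      - by rewrite -e1 -e2.
    rewrite -hc /c; apply: (sum_In (P := ideal_pow I q.+1)); first exact: ip_0.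
      by move=> a b; apply: ip_add.
    move=> t ht; case: eqP => [hdt|_]; last exact: ip_0.
    apply: ip_scale; apply: Hmono => //.
    by rewrite -[degm om t.2]/(dg t) hdt.
  move=> p hp y; split.
    by move=> hy; have := ip_sub_ge hG hy; rewrite mulnA.
  case: p hp Hhom => [//|q] _ Hhom; case=> N [f [hf hf0 ->]].
  apply: (big_ind (ideal_pow I q.+1)); first exact: ip_0.
    by move=> a b; apply: ip_add.
  move=> j _; case: (ltnP j (q.+1 * k * w)) => hj.
    by rewrite hf0 //; exact: ip_0.
  by apply: (Hhom q.+1 _ j).
split.
  by move=> Hs; apply: core => p hp hpn y hy; exact: (proj2 (Hs p hp hpn y) hy).
move=> hkn; apply: core => p hp hpn y hy.
case: p hp hpn hy => [//|[|p]] _ hpn hy.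
  rewrite -[y]mul1r; apply: (ip_mul (p := 0%N)) => //.
  by rewrite /I; rewrite mul1n in hy.
exfalso; move: hpn hkn; simpl; nia.
Qed.
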